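(* Let $\mathcal{M}=[0,S)\times_h\mathbb{S}^{N-1}$ be a model manifold, let $R_0\in(0,S)$, $f\in C^0([R_0,S))$, $\varphi\in C^1((R_0,S))$, $\kappa\in C^0((R_0,S))$, and for $r\in(R_0,S)$, $c\in\mathbb{R}$ let $$w(r,c)=\frac{1}{h(r)^{N-1}\int_{R_0}^r\frac{ds}{h(s)^{N-1}}}\left(c-\int_{R_0}^r\int_s^r\Big(\frac{h(t)}{h(s)}\Big)^{N-1}f(t)\,dt\,ds\right).$$ Suppose that $\varphi'(r)-w(r,\varphi(r))\ge0$ for all $r\in(R_0,S)$, and that $$h(r_2)^{N-1}\kappa(r_2)-h(r_1)^{N-1}\kappa(r_1)+\int_{r_1}^{r_2}h(t)^{N-1}f(t)\,dt\le0$$ for all $r_1,r_2\in(R_0,S)$ with $r_1<r_2$. Then for every $r_0\in(R_0,S)$ with $w(r_0,\varphi(r_0))-\kappa(r_0)=0$ we have $w(r,\varphi(r))-\kappa(r)\le0$ for all $r\in(R_0,r_0]$.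
   Context: Model manifold data: $N\ge2$, $S\in(0,+\infty]$, $h\in C^\infty([0,S))$ with $h>0$ on $(0,S)$, $h'(0)=1$, $h^{(2k)}(0)=0$ for all $k\ge0$. *)

(* Defs.v *)
From Stdlib Require Import Reals.
From Coquelicot Require Import Coquelicot.
Open Scope R_scope.

Definition in_Ico (a : R) (b : Rbar) (x : R) : Prop := a <= x /\ Rbar_lt (Finite x) b.
Definition in_Ioo (a : R) (b : Rbar) (x : R) : Prop := a < x /\ Rbar_lt (Finite x) b.

Definition cont_on (D : R -> Prop) (f : R -> R) : Prop :=
  forall x, D x -> filterlim f (within D (locally x)) (locally (f x)).

Definition C1_on (D : R -> Prop) (f : R -> R) : Prop :=
  forall x, D x -> ex_derive f x /\ continuous (Derive f) x.

(* Model manifold data: N >= 2, S in (0,+oo], h in C^oo([0,S)) (one-sided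
   derivatives at 0, given by the family Dh: Dh n = n-th derivative on [0,S)),
   h > 0 on (0,S), h'(0) = 1, h^(2k)(0) = 0 for all k. *)
Definition model_manifold (N : nat) (S : Rbar) (h : R -> R) : Prop :=
  (2 <= N)%nat /\ Rbar_lt (Finite 0) S /\
  (forall x, in_Ioo 0 S x -> 0 < h x) /\
  exists Dh : nat -> R -> R,
    (forall x, in_Ico 0 S x -> Dh O x = h x) /\
    (forall n x, in_Ico 0 S x ->
       filterlim (fun y => (Dh n y - Dh n x) / (y - x))
         (within (fun y => in_Ico 0 S y /\ y <> x) (locally x))
         (locally (Dh (Datatypes.S n) x))) /\
    Dh 1%nat 0 = 1 /\
    (forall k, Dh (2 * k)%nat 0 = 0).

Definition w (N : nat) (h : R -> R) (R0 : R) (f : R -> R) (r c : R) : R :=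
  / (h r ^ (N - 1) * RInt (fun s => / h s ^ (N - 1)) R0 r) *
  (c - RInt (fun s => RInt (fun t => (h t / h s) ^ (N - 1) * f t) s r) R0 r).

(* Main.v *)
Require Import Defs.
From Stdlib Require Import Reals Lra.
From Coquelicot Require Import Coquelicot.
Open Scope R_scope.

Definition cw (D : R -> Prop) (g : R -> R) (x : R) :=
  forall eps, 0 < eps -> exists d, 0 < d /\
    forall y, D y -> Rabs (y - x) < d -> Rabs (g y - g x) < eps.

Lemma cont_on_cw D g x : cont_on D g -> D x -> cw D g x.
Proof.
intros Hc Hx eps He. specialize (Hc x Hx).
apply filterlim_locally with (eps := mkposreal eps He) in Hc.
unfold within in Hc. destruct Hc as [d Hd]. exists d. split. apply cond_pos.
intros y Dy Hy. exact (Hd y Hy Dy).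
Qed.

Lemma cw_sub D D' g x : cw D g x -> (forall y, D' y -> D y) -> cw D' g x.
Proof.
intros H Hs eps He. destruct (H eps He) as [d [Hd Hy]]. exists d. split; auto.
Qed.

Lemma cw_max (S : Rbar) (a : R) (g : R -> R) (x : R) : Rbar_lt a S -> Rbar_lt x S ->
  cw (in_Ico a S) g (Rmax x a) -> continuous (fun y => g (Rmax y a)) x.
Proof.
intros Ha Hx H. apply filterlim_locally. intro eps.
destruct (H eps (cond_pos eps)) as [d [Hd Hy]].
assert (Hl : locally x (fun u => Rbar_lt u S)) by exact (open_Rbar_lt' x S Hx).
destruct Hl as [d2 Hd2].
exists (mkposreal _ (Rmin_pos _ _ Hd (cond_pos d2))). intros y Hb.
change (Rabs (y - x) < Rmin d d2) in Hb.
change (Rabs (g (Rmax y a) - g (Rmax x a)) < eps).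
apply Hy.
- split. apply Rmax_r. unfold Rmax; destruct (Rle_dec y a); auto.
  apply Hd2. change (Rabs (y - x) < d2). eapply Rlt_le_trans. exact Hb. apply Rmin_r.
- apply Rabs_def2 in Hb. assert (Rmin d d2 <= d) by apply Rmin_l.
  apply Rabs_def1; unfold Rmax; destruct (Rle_dec y a); destruct (Rle_dec x a); lra.
Qed.

Lemma cw_h N S h (x : R) : model_manifold N S h -> in_Ico 0 S x -> cw (in_Ico 0 S) h x.
Proof.
intros HM Hx. destruct HM as [_ [_ [_ [Dh [H0 [Hd _]]]]]].
intros eps He.
pose proof (Hd 0%nat x Hx) as L.
apply filterlim_locally with (eps := mkposreal 1 Rlt_0_1) in L.
unfold within in L. destruct L as [d Hdd].
set (L0 := Dh 1%nat x) in *.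
set (M := Rabs L0 + 1).
assert (HM : 0 < M) by (unfold M; pose proof (Rabs_pos L0); lra).
exists (Rmin d (eps / M)). split.
{ apply Rmin_pos. apply cond_pos. apply Rdiv_lt_0_compat; lra. }
intros y Hy Hyx. destruct (Req_dec y x) as [->|Hne].
{ rewrite Rminus_eq_0, Rabs_R0; lra. }
assert (Hb : Rabs (y - x) < d). { eapply Rlt_le_trans. exact Hyx. apply Rmin_l. }
assert (He2 : Rabs (y - x) < eps / M). { eapply Rlt_le_trans. exact Hyx. apply Rmin_r. }
specialize (Hdd y Hb (conj Hy Hne)).
change (Rabs ((Dh 0%nat y - Dh 0%nat x) / (y - x) - L0) < 1) in Hdd.
set (q := (Dh 0%nat y - Dh 0%nat x) / (y - x)) in *.
rewrite <- (H0 y Hy), <- (H0 x Hx).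
replace (Dh 0%nat y - Dh 0%nat x) with (q * (y - x)) by (unfold q; field; lra).
rewrite Rabs_mult.
assert (Hq : Rabs q < M).
{ unfold M. replace q with ((q - L0) + L0) by ring.
  pose proof (Rabs_triang (q - L0) L0). lra. }
assert (E : M * (eps / M) = eps) by (field; lra).
pose proof (Rabs_pos q). pose proof (Rabs_pos (y - x)).
assert (Rabs q * Rabs (y - x) <= M * Rabs (y - x)) by (apply Rmult_le_compat_r; lra).
assert (M * Rabs (y - x) < M * (eps / M)) by (apply Rmult_lt_compat_l; lra).
lra.
Qed.

Lemma continuous_pow_n (g : R -> R) x n : continuous g x -> continuous (fun y => g y ^ n) x.
Proof.
intros H. induction n as [|n IH]; simpl.
- apply continuous_const.
- apply (continuous_mult g (fun y => g y ^ n)); auto.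
Qed.

Lemma Sx_le (S : Rbar) (a b : R) : Rbar_lt b S -> a <= b -> Rbar_lt a S.
Proof. destruct S; simpl; intros; lra. Qed.

Lemma exR (S : Rbar) (g : R -> R) (a b : R) :
  (forall z : R, Rbar_lt z S -> continuous g z) -> Rbar_lt a S -> Rbar_lt b S ->
  ex_RInt g a b.
Proof.
intros Hc Ha Hb. apply (ex_RInt_continuous (V := R_CompleteNormedModule)). intros z Hz. apply Hc.
unfold Rmax in Hz; destruct (Rle_dec a b).
- apply (Sx_le S z b Hb). lra.
- apply (Sx_le S z a Ha). lra.
Qed.

Lemma FTC_gen (S : Rbar) (g : R -> R) (a x : R) :
  (forall z : R, Rbar_lt z S -> continuous g z) -> Rbar_lt a S -> Rbar_lt x S ->
  is_derive (fun b => RInt g a b) x (g x).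
Proof.
intros Hc Ha Hx. apply (is_derive_RInt (V := R_NormedModule) g (fun b => RInt g a b) a x); [|auto].
assert (Hl : locally x (fun u => Rbar_lt u S)) by exact (open_Rbar_lt' x S Hx).
destruct Hl as [d Hd]. exists d. intros y Hy.
apply (RInt_correct (V := R_CompleteNormedModule)). apply (exR S); auto.
Qed.

Theorem proposition3p4 (N : nat) (Smax : Rbar) (h : R -> R)
  (R0 : R) (f phi kappa : R -> R) :
  model_manifold N Smax h ->
  0 < R0 -> Rbar_lt (Finite R0) Smax ->
  cont_on (in_Ico R0 Smax) f ->
  C1_on (in_Ioo R0 Smax) phi ->
  cont_on (in_Ioo R0 Smax) kappa ->
  (forall r, in_Ioo R0 Smax r -> Derive phi r - w N h R0 f r (phi r) >= 0) ->
  (forall r1 r2, in_Ioo R0 Smax r1 -> in_Ioo R0 Smax r2 -> r1 < r2 ->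
     h r2 ^ (N - 1) * kappa r2 - h r1 ^ (N - 1) * kappa r1
     + RInt (fun t => h t ^ (N - 1) * f t) r1 r2 <= 0) ->
  forall r0, in_Ioo R0 Smax r0 ->
  w N h R0 f r0 (phi r0) - kappa r0 = 0 ->
  forall r, R0 < r <= r0 -> w N h R0 f r (phi r) - kappa r <= 0.
Proof.
intros HM HR0 HSR0 Hf Hphi _ Hw Hk r0 Hr0 Hwr0 r Hr.
set (ht := fun x => h (Rmax x R0)).
set (ft := fun x => f (Rmax x R0)).
set (Ht := fun x => ht x ^ (N - 1)).
assert (Hmx : forall x : R, Rbar_lt x Smax -> in_Ico R0 Smax (Rmax x R0)).
{ intros x Hx. split. apply Rmax_r. unfold Rmax; destruct (Rle_dec x R0); auto. }
assert (c_ht : forall x : R, Rbar_lt x Smax -> continuous ht x).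
{ intros x Hx. apply (cw_max Smax); auto. apply (cw_sub (in_Ico 0 Smax)).
  apply (cw_h N); auto. destruct (Hmx x Hx); split; auto; lra.
  intros y [Hy1 Hy2]; split; auto; lra. }
assert (c_ft : forall x : R, Rbar_lt x Smax -> continuous ft x).
{ intros x Hx. apply (cw_max Smax); auto. apply cont_on_cw; auto. }
assert (pos_ht : forall x : R, Rbar_lt x Smax -> 0 < ht x).
{ intros x Hx. destruct HM as [_ [_ [Hp _]]]. apply Hp. destruct (Hmx x Hx).
  split; auto; lra. }
assert (pos_Ht : forall x : R, Rbar_lt x Smax -> 0 < Ht x).
{ intros x Hx. apply pow_lt. auto. }
assert (c_Ht : forall x : R, Rbar_lt x Smax -> continuous Ht x).
{ intros x Hx. apply continuous_pow_n. auto. }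
assert (c_iH : forall x : R, Rbar_lt x Smax -> continuous (fun s => / Ht s) x).
{ intros x Hx. apply continuous_Rinv_comp. auto. apply Rgt_not_eq, pos_Ht, Hx. }
assert (c_Hf : forall x : R, Rbar_lt x Smax -> continuous (fun s => Ht s * ft s) x).
{ intros x Hx. apply (continuous_mult Ht ft); auto. }
set (I := (fun b => RInt (fun s => / Ht s) R0 b) : R -> R).
set (F := (fun b => RInt (fun s => Ht s * ft s) R0 b) : R -> R).
assert (dI : forall x : R, Rbar_lt x Smax -> is_derive I x (/ Ht x)).
{ intros x Hx. apply (FTC_gen Smax (fun s => / Ht s)); auto. }
assert (dF : forall x : R, Rbar_lt x Smax -> is_derive F x (Ht x * ft x)).
{ intros x Hx. apply (FTC_gen Smax (fun s => Ht s * ft s)); auto. }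
assert (c_F : forall x : R, Rbar_lt x Smax -> continuous F x).
{ intros x Hx. apply (ex_derive_continuous (K := R_AbsRing) (V := R_NormedModule)). eexists. apply dF; auto. }
assert (c_FH : forall x : R, Rbar_lt x Smax -> continuous (fun s => F s * / Ht s) x).
{ intros x Hx. apply (continuous_mult F (fun s => / Ht s)); auto. }
set (K := (fun b => RInt (fun s => F s * / Ht s) R0 b) : R -> R).
assert (dK : forall x : R, Rbar_lt x Smax -> is_derive K x (F x * / Ht x)).
{ intros x Hx. apply (FTC_gen Smax (fun s => F s * / Ht s)); auto. }
assert (pos_I : forall x : R, Rbar_lt x Smax -> R0 < x -> 0 < I x).
{ intros x Hx Hx0. apply RInt_gt_0; auto.
  - intros y Hy. apply Rinv_0_lt_compat, pos_Ht. apply (Sx_le Smax y x); auto; lra.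
  - intros y Hy. apply c_iH. apply (Sx_le Smax y x); auto; lra. }
assert (w_eq : forall (x c : R), Rbar_lt x Smax -> R0 < x ->
   w N h R0 f x c = / (Ht x * I x) * (c - (F x * I x - K x))).
{ intros x c Hx Hx0. unfold w.
  assert (E1 : h x ^ (N-1) = Ht x) by (unfold Ht, ht; rewrite Rmax_left; lra).
  assert (E2 : RInt (fun s => / h s ^ (N-1)) R0 x = I x).
  { unfold I. apply RInt_ext. intros s Hs. rewrite Rmin_left, Rmax_right in Hs by lra.
    unfold Ht, ht. rewrite Rmax_left by lra. reflexivity. }
  assert (E3 : RInt (fun s => RInt (fun t => (h t / h s)^(N-1) * f t) s x) R0 x
              = F x * I x - K x).
  { transitivity (RInt (fun s => minus (scal (F x) (/ Ht s)) (F s * / Ht s)) R0 x).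
    - apply RInt_ext. intros s Hs. rewrite Rmin_left, Rmax_right in Hs by lra.
      assert (Hs' : Rbar_lt s Smax) by (apply (Sx_le Smax s x); auto; lra).
      rewrite (RInt_ext _ (fun t => scal (/ Ht s) (Ht t * ft t))).
      2: { intros t Ht'. rewrite Rmin_left, Rmax_right in Ht' by lra.
           unfold Ht, ht, ft. rewrite !Rmax_left by lra.
           unfold scal; simpl; unfold mult; simpl. unfold Rdiv.
           rewrite Rpow_mult_distr, pow_inv. ring. }
      rewrite (RInt_scal (V := R_CompleteNormedModule)) by (apply (exR Smax); auto).
      assert (Ch : F s + RInt (fun t => Ht t * ft t) s x = F x)
        by (unfold F; apply (RInt_Chasles (V:=R_CompleteNormedModule)); apply (exR Smax); auto).
      unfold scal, minus, plus, opp in *; simpl in *; unfold mult in *; simpl in *.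
      replace (RInt (fun t => Ht t * ft t) s x) with (F x - F s) by lra. ring.
    - rewrite (RInt_minus (V := R_CompleteNormedModule)).
      2: { apply (exR Smax); auto. intros z Hz.
           apply (continuous_mult (K:=R_AbsRing) (fun _ => F x) (fun s => / Ht s)).
           apply continuous_const. auto. }
      2: { apply (exR Smax); auto. }
      rewrite (RInt_scal (V := R_CompleteNormedModule)) by (apply (exR Smax); auto).
      unfold scal, minus, plus, opp; simpl; unfold mult; simpl. reflexivity. }
  rewrite E1, E2, E3. reflexivity. }
set (v := fun t => (phi t + K t) / I t).
set (dv := fun t => ((Derive phi t + F t * / Ht t) * I t - (phi t + K t) * / Ht t) / I t ^ 2).
assert (Dv : forall x, in_Ioo R0 Smax x -> is_derive v x (dv x)).
{ intros x [Hx0 Hx]. unfold v, dv. apply (is_derive_div (fun t => phi t + K t) I).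
  - apply (is_derive_plus (K:=R_AbsRing) (V:=R_NormedModule) phi K).
    apply Derive_correct, (Hphi x (conj Hx0 Hx)). apply dK; auto.
  - apply dI; auto.
  - apply Rgt_not_eq, pos_I; auto. }
assert (Dv_nonneg : forall x, in_Ioo R0 Smax x -> 0 <= dv x).
{ intros x Hx. pose proof (Hw x Hx) as Hwx. destruct Hx as [Hx0 Hx].
  rewrite w_eq in Hwx by auto.
  pose proof (pos_I x Hx Hx0). pose proof (pos_Ht x Hx).
  replace (dv x) with ((Derive phi x - / (Ht x * I x) * (phi x - (F x * I x - K x))) / I x)
    by (unfold dv; field; split; lra).
  apply Rmult_le_pos; [lra|]. left; apply Rinv_0_lt_compat; lra. }
assert (Ioo_sub : forall x, r <= x <= r0 -> in_Ioo R0 Smax x).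
{ intros x Hx. destruct Hr0. split. lra. apply (Sx_le Smax x r0); auto; lra. }
assert (Mono : v r <= v r0).
{ destruct (MVT_gen v r r0 dv) as [c [Hc Hc2]].
  - intros x Hx. rewrite Rmin_left, Rmax_right in Hx by lra. apply Dv, Ioo_sub; lra.
  - intros x Hx. rewrite Rmin_left, Rmax_right in Hx by lra.
    apply continuity_pt_filterlim.
    apply (ex_derive_continuous (K:=R_AbsRing) (V:=R_NormedModule)).
    eexists. apply Dv, Ioo_sub; lra.
  - rewrite Rmin_left, Rmax_right in Hc by lra.
    assert (0 <= dv c) by (apply Dv_nonneg, Ioo_sub; lra). nra. }
assert (Eid : forall x, in_Ioo R0 Smax x -> Ht x * w N h R0 f x (phi x) = v x - F x).
{ intros x [Hx0 Hx]. rewrite w_eq by auto.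
  pose proof (pos_I x Hx Hx0). pose proof (pos_Ht x Hx). unfold v. field. split; lra. }
destruct (Rle_lt_or_eq_dec r r0 (proj2 Hr)) as [Hlt | Heq]; [| subst r; lra].
pose proof (Hk r r0 (Ioo_sub r ltac:(lra)) Hr0 Hlt) as Hk'.
assert (Hint : RInt (fun t => h t ^ (N-1) * f t) r r0 = F r0 - F r).
{ rewrite (RInt_ext _ (fun t => Ht t * ft t)).
  2:{ intros t Ht'; rewrite Rmin_left, Rmax_right in Ht' by lra.
      unfold Ht, ht, ft; rewrite Rmax_left by lra; reflexivity. }
  assert (Hrs : Rbar_lt r Smax) by (apply (Sx_le Smax r r0); [apply Hr0|lra]).
  assert (Ch : F r + RInt (fun t => Ht t * ft t) r r0 = F r0)
    by (unfold F; apply (RInt_Chasles (V:=R_CompleteNormedModule)); apply (exR Smax); auto; apply Hr0).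
  lra. }
assert (E1 : forall x, R0 <= x -> h x ^ (N-1) = Ht x)
  by (intros x Hx; unfold Ht, ht; rewrite Rmax_left; lra).
rewrite Hint, !E1 in Hk' by lra.
pose proof (Eid r (Ioo_sub r ltac:(lra))) as Er.
pose proof (Eid r0 Hr0) as Er0.
replace (kappa r0) with (w N h R0 f r0 (phi r0)) in Hk' by lra.
assert (Hrs : Rbar_lt r Smax) by (apply (Sx_le Smax r r0); [apply Hr0|lra]).
pose proof (pos_Ht r Hrs).
assert (Ht r * (w N h R0 f r (phi r) - kappa r) <= 0) by lra.
nra.
Qed.
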